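(* Let $d_3(n)=\sum_{abc=n}1$ be the three-divisor function (so $\sum_{n\ge1}d_3(n)n^{-s}=\zeta(s)^3$), and for real $x$ and positive integer $H$ let $M_3(x,H)=H\,\mathrm{Res}_{s=1}\big(\zeta(s)^3x^{s-1}\big)$. For positive integers $N,H$ define $$J_3(N,H)=\sum_{N<x\le 2N}\Big|\sum_{x<n\le x+H}d_3(n)-M_3(x,H)\Big|^2,\qquad \widetilde{J}_3(N,H)=\sum_{N<x\le 2N}\Big|\sum_{0\le |n-x|\le H}\Big(1-\frac{|n-x|}{H}\Big)d_3(n)-M_3(x,H)\Big|^2,$$ where $x$ and $n$ run over positive integers. Fix a constant $c>0$. Assume the following (Conjecture CL): for every $\varepsilon>0$ there is $C_\varepsilon>0$ such that $\widetilde{J}_3(N,H)\le C_\varepsilon N^{\varepsilon}NH$ for all positive integers $N,H$ with $H\le cN^{1/3}$. Then for every $\varepsilon>0$ there is $C'_\varepsilon>0$ such that $J_3(N,H)\le C'_\varepsilon N^{\varepsilon}NH^{6/5}$ for all positive integers $N,H$ with $H\le cN^{1/3}$.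
   Context: The notation $A\ll B$ means $|A|\le C B$ for some constant $C$; the estimates are understood as $N\to\infty$. *)

(* Defs.v *)
From Stdlib Require Import Reals Lra List Arith.
From Coquelicot Require Import Coquelicot.
Open Scope R_scope.

Definition rsum (l : list nat) (f : nat -> R) : R :=
  fold_right (fun i acc => f i + acc) 0 l.

(* d_3(n) = #{(a,b,c) positive integers : a*b*c = n}  (each factor is <= n) *)
Definition d3 (n : nat) : nat :=
  list_sum (map (fun a => list_sum (map (fun b => list_sum (map (fun c =>
    if Nat.eqb (a * b * c) n then 1%nat else 0%nat) (seq 1 n))) (seq 1 n))) (seq 1 n)).

(* Stieltjes constants, from the Laurent expansion
   zeta(s) = 1/(s-1) + sum_k (-1)^k gamma_k (s-1)^k / k! :
   gamma_k = lim_m ( sum_{n<=m} (log n)^k / n - (log m)^(k+1)/(k+1) ). *)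
Definition stieltjes (k : nat) : R :=
  real (Lim_seq (fun m : nat =>
    rsum (seq 1 m) (fun n => (ln (INR n)) ^ k / INR n)
    - (ln (INR m)) ^ (S k) / INR (S k))).

(* Res_{s=1} ( zeta(s)^3 x^(s-1) ) = (log x)^2/2 + 3 g0 log x + 3 g0^2 - 3 g1 *)
Definition res3 (x : R) : R :=
  (ln x) ^ 2 / 2 + 3 * stieltjes 0 * ln x
  + 3 * (stieltjes 0) ^ 2 - 3 * stieltjes 1.

Definition M3 (x : R) (H : nat) : R := INR H * res3 x.

Definition S3 (x H : nat) : R :=
  rsum (seq (S x) H) (fun n => INR (d3 n)).

Definition S3tilde (x H : nat) : R :=
  rsum (seq 1 (x + H)) (fun n =>
    if Rle_dec (Rabs (INR n - INR x)) (INR H)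
    then (1 - Rabs (INR n - INR x) / INR H) * INR (d3 n)
    else 0).

Definition J3 (N H : nat) : R :=
  rsum (seq (S N) N) (fun x => (S3 x H - M3 (INR x) H) ^ 2).

Definition J3tilde (N H : nat) : R :=
  rsum (seq (S N) N) (fun x => (S3tilde x H - M3 (INR x) H) ^ 2).

(* Main.v *)
Require Import Defs.
From Stdlib Require Import Reals Lra Lia List Arith ZArith.
From Coquelicot Require Import Coquelicot.
Open Scope R_scope.

Lemma rsum_nil f : rsum nil f = 0. Proof. reflexivity. Qed.
Lemma rsum_cons i l f : rsum (i :: l) f = f i + rsum l f. Proof. reflexivity. Qed.

Lemma rsum_app l1 l2 f : rsum (l1 ++ l2) f = rsum l1 f + rsum l2 f.
Proof. induction l1 as [|i l IH]; simpl; [lra|]. unfold rsum in *; simpl. rewrite IH; lra. Qed.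

Lemma rsum_ext l f g : (forall i, In i l -> f i = g i) -> rsum l f = rsum l g.
Proof. induction l as [|i l IH]; intros Hf; [reflexivity|].
  rewrite !rsum_cons, Hf by (left; auto). rewrite IH; auto. intros; apply Hf; right; auto. Qed.

Lemma rsum_plus l f g : rsum l (fun i => f i + g i) = rsum l f + rsum l g.
Proof. induction l as [|i l IH]; [simpl; unfold rsum; simpl; lra|]. rewrite !rsum_cons, IH; lra. Qed.

Lemma rsum_minus l f g : rsum l (fun i => f i - g i) = rsum l f - rsum l g.
Proof. induction l as [|i l IH]; [simpl; unfold rsum; simpl; lra|]. rewrite !rsum_cons, IH; lra. Qed.

Lemma rsum_scal l c f : rsum l (fun i => c * f i) = c * rsum l f.
Proof. induction l as [|i l IH]; [simpl; unfold rsum; simpl; lra|]. rewrite !rsum_cons, IH; lra. Qed.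

Lemma rsum_const l c : rsum l (fun _ => c) = INR (length l) * c.
Proof. induction l as [|i l IH]; [simpl; unfold rsum; simpl; lra|].
  rewrite rsum_cons, IH. simpl length. rewrite S_INR. lra. Qed.

Lemma rsum_le l f g : (forall i, In i l -> f i <= g i) -> rsum l f <= rsum l g.
Proof. induction l as [|i l IH]; intros Hf; [simpl; unfold rsum; simpl; lra|].
  rewrite !rsum_cons. assert (f i <= g i) by (apply Hf; left; auto).
  assert (rsum l f <= rsum l g) by (apply IH; intros; apply Hf; right; auto). lra. Qed.

Lemma rsum_nonneg l f : (forall i, In i l -> 0 <= f i) -> 0 <= rsum l f.
Proof. intros H. replace 0 with (rsum l (fun _ => 0)). apply rsum_le; auto.
  rewrite rsum_const; lra. Qed.

Lemma rsum_abs_le l f B : (forall i, In i l -> Rabs (f i) <= B) -> Rabs (rsum l f) <= INR (length l) * B.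
Proof. induction l as [|i l IH]; intros Hf; [simpl; unfold rsum; simpl; rewrite Rabs_R0; lra|].
  rewrite rsum_cons. simpl length; rewrite S_INR.
  assert (Rabs (f i) <= B) by (apply Hf; left; auto).
  assert (Rabs (rsum l f) <= INR (length l) * B) by (apply IH; intros; apply Hf; right; auto).
  pose proof (Rabs_triang (f i) (rsum l f)). lra. Qed.

Lemma rsum_term_le l f i : In i l -> (forall j, In j l -> 0 <= f j) -> f i <= rsum l f.
Proof. induction l as [|k l IH]; intros Hi Hf; [destruct Hi|]. rewrite rsum_cons.
  destruct Hi as [<-|Hi].
  - assert (0 <= rsum l f) by (apply rsum_nonneg; intros; apply Hf; right; auto). lra.
  - assert (0 <= f k) by (apply Hf; left; auto).
    assert (f i <= rsum l f) by (apply IH; auto; intros; apply Hf; right; auto). lra. Qed.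

Lemma rsum_swap l1 l2 (F : nat -> nat -> R) :
  rsum l1 (fun i => rsum l2 (fun j => F i j)) = rsum l2 (fun j => rsum l1 (fun i => F i j)).
Proof. induction l1 as [|i l IH].
  - rewrite rsum_nil. transitivity (rsum l2 (fun _ => 0)).
    rewrite rsum_const; lra. apply rsum_ext; auto.
  - rewrite rsum_cons, IH. rewrite <- rsum_plus. apply rsum_ext; intros; rewrite rsum_cons; auto. Qed.

Lemma rsum_CS l f : (rsum l f) ^ 2 <= INR (length l) * rsum l (fun i => f i ^ 2).
Proof. induction l as [|i l IH]; [unfold rsum; simpl; lra|].
  rewrite !rsum_cons. simpl length. rewrite S_INR.
  set (n := INR (length l)) in *. set (S := rsum l f) in *. set (Q := rsum l (fun i => f i ^ 2)) in *.
  assert (Hn : 0 <= n) by apply pos_INR.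
  assert (HQ : 0 <= Q) by (apply rsum_nonneg; intros; apply pow2_ge_0).
  assert (2 * f i * S <= n * f i ^ 2 + Q).
  { destruct (Rle_lt_dec n 0) as [H0|H0].
    - assert (n = 0) by lra. assert (S ^ 2 <= 0) by (rewrite H in IH; lra).
      assert (S = 0) by nra. subst S. rewrite H2. nra.
    - pose proof (pow2_ge_0 (n * f i - S)).
      assert (0 <= n * f i ^ 2 + Q - 2 * f i * S); [|lra].
      apply (Rmult_le_reg_l n); [lra|]. rewrite Rmult_0_r. nra. }
  nra. Qed.

Lemma rsum_seq_shift a k z g : rsum (seq (z + k) a) g = rsum (seq k a) (fun t => g (z + t)%nat).
Proof. revert k. induction a as [|a IH]; intros k; [reflexivity|].
  simpl seq. rewrite !rsum_cons. f_equal. replace (S (z + k)) with (z + S k)%nat by lia. apply IH. Qed.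

Lemma rsum_seq_bound m g T : (forall j, (j < m)%nat -> g j <= T) -> rsum (seq 0 m) g <= INR m * T.
Proof. intros H. replace (INR m * T) with (rsum (seq 0 m) (fun _ => T)).
  apply rsum_le. intros i Hi; apply in_seq in Hi; apply H; lia.
  rewrite rsum_const, length_seq; auto. Qed.
Definition E (e : nat -> R) (z a : nat) : R := rsum (seq (S z) a) e.
Definition Et (e : nat -> R) (z K : nat) : R := / INR K * rsum (seq 0 K) (fun a => E e (z + a) K).
Definition W (xs : list nat) (F : nat -> R) : R := rsum xs (fun x => F x ^ 2).

Lemma E_split e z a b : E e z (a + b) = E e z a + E e (z + a) b.
Proof. unfold E. rewrite seq_app, rsum_app. replace (S z + a)%nat with (S (z + a)) by lia. reflexivity. Qed.

Lemma E_mul e z m K : E e z (m * K) = rsum (seq 0 m) (fun j => E e (z + j * K) K).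
Proof. induction m as [|m IH].
  - unfold E, rsum; simpl; reflexivity.
  - rewrite seq_S, rsum_app, <- IH. rewrite rsum_cons, rsum_nil.
    replace (S m * K)%nat with (m * K + K)%nat by lia. rewrite E_split. simpl (0 + m)%nat. lra. Qed.

Lemma E_key e x m K : (1 <= K)%nat ->
  E e x (m * K) = rsum (seq 0 m) (fun j => Et e (x + j * K) K)
     + / INR K * rsum (seq 0 K) (fun a => E e x a - E e (x + m * K) a).
Proof. intros HK.
  assert (HKr : INR K <> 0) by (apply not_0_INR; lia).
  assert (H1 : rsum (seq 0 m) (fun j => Et e (x + j * K) K)
      = / INR K * rsum (seq 0 K) (fun a => E e (x + a) (m * K))).
  { unfold Et. rewrite rsum_scal. f_equal.
    transitivity (rsum (seq 0 K) (fun a => rsum (seq 0 m) (fun j => E e (x + a + j * K) K))).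
    - rewrite <- rsum_swap. apply rsum_ext; intros j _. apply rsum_ext; intros a _. f_equal; lia.
    - apply rsum_ext; intros a _. rewrite E_mul. reflexivity. }
  rewrite H1. rewrite <- Rmult_plus_distr_l, <- rsum_plus.
  transitivity (/ INR K * rsum (seq 0 K) (fun _ => E e x (m * K))).
  - rewrite rsum_const, length_seq. field; auto.
  - f_equal. apply rsum_ext; intros a _.
    pose proof (E_split e x a (m * K)). pose proof (E_split e x (m * K) a).
    replace (a + m * K)%nat with (m * K + a)%nat in H by lia. lra. Qed.

Lemma W_nonneg xs F : 0 <= W xs F.
Proof. apply rsum_nonneg; intros; apply pow2_ge_0. Qed.

Lemma W_ext xs F G : (forall x, In x xs -> F x = G x) -> W xs F = W xs G.
Proof. intros H; unfold W; apply rsum_ext; intros; rewrite H; auto. Qed.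

Lemma W_add xs F G : W xs (fun x => F x + G x) <= 2 * W xs F + 2 * W xs G.
Proof. unfold W. rewrite <- !rsum_scal, <- rsum_plus. apply rsum_le; intros.
  pose proof (pow2_ge_0 (F i - G i)). nra. Qed.

Lemma W_le2 xs F G d : (forall x, In x xs -> Rabs (F x - G x) <= d) ->
  W xs F <= 2 * W xs G + 2 * INR (length xs) * d ^ 2.
Proof. intros H. unfold W. rewrite <- rsum_scal.
  replace (2 * INR (length xs) * d ^ 2) with (INR (length xs) * (2 * d ^ 2)) by ring.
  rewrite <- rsum_const, <- rsum_plus. apply rsum_le; intros x Hx.
  specialize (H x Hx). assert (Hd : (F x - G x) ^ 2 <= d ^ 2).
  { rewrite <- (pow2_abs (F x - G x)). pose proof (Rabs_pos (F x - G x)). nra. }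
  pose proof (pow2_ge_0 (F x - 2 * G x)). nra. Qed.

Lemma W_sum xs m (G : nat -> nat -> R) T : (forall j, (j < m)%nat -> W xs (G j) <= T) ->
  W xs (fun x => rsum (seq 0 m) (fun j => G j x)) <= INR m ^ 2 * T.
Proof. intros H. unfold W.
  apply Rle_trans with (rsum xs (fun x => INR m * rsum (seq 0 m) (fun j => G j x ^ 2))).
  - apply rsum_le; intros x _. pose proof (rsum_CS (seq 0 m) (fun j => G j x)).
    rewrite length_seq in H0. exact H0.
  - rewrite rsum_scal, rsum_swap.
    assert (rsum (seq 0 m) (fun j => rsum xs (fun x => G j x ^ 2)) <= INR m * T).
    { apply rsum_seq_bound; auto. }
    replace (INR m ^ 2 * T) with (INR m * (INR m * T)) by ring.
    apply Rmult_le_compat_l; auto. apply pos_INR. Qed.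

Lemma W_avg xs K (g : nat -> nat -> R) V : (1 <= K)%nat -> (forall a, (a < K)%nat -> W xs (g a) <= V) ->
  W xs (fun x => / INR K * rsum (seq 0 K) (fun a => g a x)) <= V.
Proof. intros HK H.
  assert (HKp : 0 < INR K) by (apply lt_0_INR; lia).
  unfold W.
  apply Rle_trans with (rsum xs (fun x => / INR K * rsum (seq 0 K) (fun a => g a x ^ 2))).
  - apply rsum_le; intros x _. pose proof (rsum_CS (seq 0 K) (fun a => g a x)).
    rewrite length_seq in H0.
    replace ((/ INR K * rsum (seq 0 K) (fun a => g a x)) ^ 2) with
      (/ INR K * / INR K * (rsum (seq 0 K) (fun a => g a x)) ^ 2) by ring.
    assert (0 < / INR K) by (apply Rinv_0_lt_compat; lra).
    apply Rle_trans with (/ INR K * / INR K * (INR K * rsum (seq 0 K) (fun a => g a x ^ 2))).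
    + apply Rmult_le_compat_l; [nra|auto].
    + right. field. lra.
  - rewrite rsum_scal, rsum_swap.
    assert (rsum (seq 0 K) (fun a => rsum xs (fun x => g a x ^ 2)) <= INR K * V).
    { apply rsum_seq_bound; auto. }
    apply Rle_trans with (/ INR K * (INR K * V)).
    + apply Rmult_le_compat_l; auto. left; apply Rinv_0_lt_compat; lra.
    + right; field; lra. Qed.

Lemma level e xs s K m r T V : (1 <= K)%nat -> (r < K)%nat ->
  (forall j, (j < m)%nat -> W xs (fun x => Et e (x + (s + j * K)) K) <= T) ->
  (forall a, (a < K)%nat -> W xs (fun x => E e (x + s) a) <= V) ->
  (forall a, (a < K)%nat -> W xs (fun x => E e (x + (s + m * K)) a) <= V) ->
  W xs (fun x => E e (x + s) (m * K + r)) <= 4 * INR m ^ 2 * T + 18 * V.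
Proof. intros HK Hr HT HV1 HV2.
  assert (HVp : 0 <= V) by (eapply Rle_trans; [apply W_nonneg|apply (HV1 0%nat); lia]).
  rewrite (W_ext xs _ (fun x => (rsum (seq 0 m) (fun j => Et e (x + s + j * K) K)
     + / INR K * rsum (seq 0 K) (fun a => E e (x + s) a - E e (x + s + m * K) a))
     + E e (x + s + m * K) r)).
  2:{ intros x _. rewrite E_split, E_key by auto. reflexivity. }
  eapply Rle_trans; [apply W_add|].
  pose proof (W_add xs (fun x => rsum (seq 0 m) (fun j => Et e (x + s + j * K) K))
     (fun x => / INR K * rsum (seq 0 K) (fun a => E e (x + s) a - E e (x + s + m * K) a))).
  assert (W xs (fun x => rsum (seq 0 m) (fun j => Et e (x + s + j * K) K)) <= INR m ^ 2 * T).
  { apply (W_sum xs m (fun j x => Et e (x + s + j * K) K)). intros j Hj.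
    rewrite (W_ext xs _ (fun x => Et e (x + (s + j * K)) K)); [auto|]. intros; f_equal; lia. }
  assert (W xs (fun x => / INR K * rsum (seq 0 K) (fun a => E e (x + s) a - E e (x + s + m * K) a)) <= 4 * V).
  { apply (W_avg xs K (fun a x => E e (x + s) a - E e (x + s + m * K) a)); auto.
    intros a Ha. eapply Rle_trans; [apply (W_add xs (fun x => E e (x+s) a) (fun x => - E e (x + s + m * K) a))|].
    assert (W xs (fun x => - E e (x + s + m * K) a) <= V).
    { unfold W. rewrite (rsum_ext xs _ (fun x => E e (x + (s + m * K)) a ^ 2)); [apply HV2; auto|]. intros x _.
      replace (x + s + m * K)%nat with (x + (s + m * K))%nat by lia. ring. }
    pose proof (HV1 a Ha). lra. }
  assert (W xs (fun x => E e (x + s + m * K) r) <= V).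
  { rewrite (W_ext xs _ (fun x => E e (x + (s + m * K)) r)); [auto|]. intros; f_equal; lia. }
  lra. Qed.

Lemma level0 e xs s a A : (forall t, (1 <= t <= a)%nat -> W xs (fun x => e (x + s + t)%nat) <= A) ->
  W xs (fun x => E e (x + s) a) <= INR a ^ 2 * A.
Proof. intros H. unfold W.
  apply Rle_trans with (rsum xs (fun x => INR a * rsum (seq 1 a) (fun t => e (x + s + t)%nat ^ 2))).
  - apply rsum_le; intros x _. unfold E.
    replace (S (x + s)) with ((x + s) + 1)%nat by lia. rewrite rsum_seq_shift.
    pose proof (rsum_CS (seq 1 a) (fun t => e (x + s + t)%nat)). rewrite length_seq in H0. exact H0.
  - rewrite rsum_scal, rsum_swap.
    assert (rsum (seq 1 a) (fun t => rsum xs (fun x => e (x + s + t)%nat ^ 2)) <= INR a * A).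
    { replace (INR a * A) with (rsum (seq 1 a) (fun _ => A)) by (rewrite rsum_const, length_seq; auto).
      apply rsum_le; intros t Ht; apply in_seq in Ht; apply H; lia. }
    replace (INR a ^ 2 * A) with (INR a * (INR a * A)) by ring.
    apply Rmult_le_compat_l; auto. apply pos_INR. Qed.
Lemma count_ind lo hi K : rsum (seq 0 K) (fun a => if ((lo <=? a)%nat && (a <? hi)%nat)%bool then 1 else 0)
   = INR (Nat.min hi K - lo).
Proof. induction K as [|K IH].
  - unfold rsum; simpl. replace (Nat.min hi 0 - lo)%nat with 0%nat by lia. reflexivity.
  - rewrite seq_S, rsum_app, IH, rsum_cons, rsum_nil. simpl (0 + K)%nat.
    destruct (Nat.leb_spec lo K); destruct (Nat.ltb_spec K hi); simpl.
    + replace (Nat.min hi (S K) - lo)%nat with (S (Nat.min hi K - lo)) by lia. rewrite S_INR; lra.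
    + replace (Nat.min hi (S K) - lo)%nat with (Nat.min hi K - lo)%nat by lia. lra.
    + replace (Nat.min hi (S K) - lo)%nat with (Nat.min hi K - lo)%nat by lia. lra.
    + replace (Nat.min hi (S K) - lo)%nat with (Nat.min hi K - lo)%nat by lia. lra. Qed.

Lemma rsum_sub lo len M g : (1 <= lo)%nat -> (lo + len <= 1 + M)%nat ->
  rsum (seq lo len) g = rsum (seq 1 M) (fun n => if ((lo <=? n)%nat && (n <? lo + len)%nat)%bool then g n else 0).
Proof. intros H1 H2.
  replace M with ((lo - 1) + (len + (M + 1 - lo - len)))%nat at 1 by lia.
  rewrite !seq_app, !rsum_app.
  replace (1 + (lo - 1))%nat with lo by lia.
  rewrite (rsum_ext (seq 1 (lo - 1)) _ (fun _ => 0)).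
  2:{ intros i Hi; apply in_seq in Hi. destruct (Nat.leb_spec lo i); simpl; [lia|auto]. }
  rewrite (rsum_ext (seq lo len) (fun n => if ((lo <=? n)%nat && (n <? lo + len)%nat)%bool then g n else 0) g).
  2:{ intros i Hi; apply in_seq in Hi. destruct (Nat.leb_spec lo i); destruct (Nat.ltb_spec i (lo+len)); simpl; lia || auto. }
  rewrite (rsum_ext (seq (lo + len) _) _ (fun _ => 0)).
  2:{ intros i Hi; apply in_seq in Hi. destruct (Nat.leb_spec lo i); destruct (Nat.ltb_spec i (lo+len)); simpl; lia || auto. }
  rewrite !rsum_const. lra. Qed.

Lemma S3tilde_avg z K : (1 <= K)%nat ->
  S3tilde (z + K) K = / INR K * rsum (seq 0 K) (fun a => rsum (seq (S (z + a)) K) (fun n => INR (d3 n))).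
Proof. intros HK.
  assert (HKp : 0 < INR K) by (apply lt_0_INR; lia).
  set (g := fun n => INR (d3 n)).
  rewrite (rsum_ext (seq 0 K) _ (fun a => rsum (seq 1 (z + K + K)) (fun n =>
     if ((S (z + a) <=? n)%nat && (n <? S (z + a) + K)%nat)%bool then g n else 0))).
  2:{ intros a Ha; apply in_seq in Ha. apply rsum_sub; lia. }
  rewrite rsum_swap, <- rsum_scal. unfold S3tilde. apply rsum_ext. intros n Hn. apply in_seq in Hn.
  rewrite (rsum_ext (seq 0 K) _ (fun a => g n * (if (((n - (z + K)) <=? a)%nat && (a <? n - z)%nat)%bool then 1 else 0))).
  2:{ intros a Ha. apply in_seq in Ha.
      destruct (Nat.leb_spec (S (z + a)) n); destruct (Nat.ltb_spec n (S (z + a) + K));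
      destruct (Nat.leb_spec (n - (z + K)) a); destruct (Nat.ltb_spec a (n - z)); simpl;
      try lia; ring. }
  rewrite rsum_scal, count_ind. fold (g n).
  assert (HINR : INR (z + K) = INR z + INR K) by apply plus_INR.
  destruct (le_lt_dec n z) as [Hnz|Hnz].
  - replace (Nat.min (n - z) K - (n - (z + K)))%nat with 0%nat by lia.
    destruct (Rle_dec (Rabs (INR n - INR (z + K))) (INR K)) as [Hle|Hle]; [|simpl; ring].
    assert (INR n <= INR z) by (apply le_INR; lia).
    rewrite Rabs_left1 in Hle by lra. assert (INR n = INR z) by lra. apply INR_eq in H0.
    subst n. rewrite HINR. replace (INR z - (INR z + INR K)) with (- INR K) by ring.
    rewrite Rabs_Ropp, Rabs_right by lra. simpl (INR 0). field; lra.
  - set (d := (n - z)%nat). assert (Hn' : n = (z + d)%nat) by lia.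
    assert (Hd : INR n = INR z + INR d) by (rewrite Hn'; apply plus_INR).
    destruct (le_lt_dec d K) as [HdK|HdK].
    + replace (Nat.min d K - (n - (z + K)))%nat with d by lia.
      assert (INR d <= INR K) by (apply le_INR; auto).
      assert (1 <= INR d) by (apply (le_INR 1); lia).
      rewrite HINR, Hd. rewrite Rabs_left1 by lra.
      destruct (Rle_dec _ _) as [Hle|Hle]; [|exfalso; apply Hle; lra].
      field; lra.
    + replace (Nat.min d K - (n - (z + K)))%nat with (K + K - d)%nat by lia.
      rewrite HINR, Hd. rewrite minus_INR by lia. rewrite (plus_INR K K).
      assert (INR K < INR d) by (apply lt_INR; auto).
      assert (INR d <= INR K + INR K) by (rewrite <- plus_INR; apply le_INR; lia).
      rewrite Rabs_right by lra.
      destruct (Rle_dec _ _) as [Hle|Hle]; [|exfalso; apply Hle; lra].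
      field; lra. Qed.
Definition e3 (n : nat) : R := INR (d3 n) - res3 (INR n).
Definition Q3 (y K : nat) : R := S3tilde y K - M3 (INR y) K.
Definition beta (N : nat) : R := (ln (6 * INR N) + 3 * Rabs (stieltjes 0)) / INR N.

Lemma Q3_1 y : (1 <= y)%nat -> Q3 y 1 = e3 y.
Proof. intros Hy. replace y with ((y - 1) + 1)%nat by lia. unfold Q3. rewrite S3tilde_avg by lia.
  unfold M3, e3. simpl seq. rewrite rsum_cons, rsum_nil, rsum_cons, rsum_nil.
  replace (S (y - 1 + 0)) with (y - 1 + 1)%nat by lia. simpl INR. field. Qed.

Lemma Q3_diff z K : (1 <= K)%nat -> Q3 (z + K) K - Et e3 z K =
  / INR K * rsum (seq 0 K) (fun a => rsum (seq (S (z + a)) K) (fun n => res3 (INR n) - res3 (INR (z + K)))).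
Proof. intros HK. assert (HKp : 0 < INR K) by (apply lt_0_INR; lia).
  unfold Q3, Et, M3, E, e3. rewrite S3tilde_avg by auto.
  rewrite (rsum_ext (seq 0 K) (fun a => rsum (seq (S (z + a)) K) (fun n => res3 (INR n) - res3 (INR (z + K))))
     (fun a => rsum (seq (S (z + a)) K) (fun n => INR (d3 n)) - rsum (seq (S (z + a)) K) (fun n => INR (d3 n) - res3 (INR n)) - INR K * res3 (INR (z+K)))).
  2:{ intros a _. rewrite !rsum_minus, rsum_const, length_seq. ring. }
  rewrite !rsum_minus, rsum_const, length_seq. field. lra. Qed.

Lemma P_diff x H : S3 x H - M3 (INR x) H - E e3 x H = rsum (seq (S x) H) (fun n => res3 (INR n) - res3 (INR x)).
Proof. unfold S3, M3, E, e3. rewrite !rsum_minus, rsum_const, length_seq. ring. Qed.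

Lemma INR6 N : INR (6 * N) = 6 * INR N.
Proof. rewrite mult_INR. simpl. ring. Qed.

Lemma ln_le_x1 x : 0 < x -> ln x <= x - 1.
Proof. intros Hx. pose proof (exp_ineq1_le (ln x)). rewrite exp_ln in H by auto. lra. Qed.

Lemma ln_le_mono x y : 0 < x -> x <= y -> ln x <= ln y.
Proof. intros Hx Hxy. destruct (Rle_lt_or_eq_dec _ _ Hxy) as [H|H].
  - left; apply ln_increasing; auto.
  - subst; lra. Qed.

Lemma res3_lip N u v : (1 <= N)%nat -> INR N < u <= 6 * INR N -> INR N < v <= 6 * INR N ->
  Rabs (res3 u - res3 v) <= Rabs (u - v) * beta N.
Proof. intros HN Hu Hv.
  assert (HN1 : 1 <= INR N) by (apply (le_INR 1); auto).
  assert (G : forall u v, INR N < u <= 6 * INR N -> INR N < v <= 6 * INR N -> v <= u ->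
            Rabs (res3 u - res3 v) <= Rabs (u - v) * beta N).
  { clear u v Hu Hv. intros u v Hu Hv Hvu.
    assert (Hr : res3 u - res3 v = (ln u - ln v) * ((ln u + ln v) / 2 + 3 * stieltjes 0)) by (unfold res3; field).
    rewrite Hr, Rabs_mult.
    assert (Hl : ln u - ln v = ln (u / v)).
    { unfold Rdiv. rewrite ln_mult, ln_Rinv by (try apply Rinv_0_lt_compat; lra). ring. }
    assert (H0 : 0 <= ln u - ln v) by (pose proof (ln_le_mono v u); lra).
    assert (H1 : ln u - ln v <= (u - v) / INR N).
    { rewrite Hl. eapply Rle_trans; [apply ln_le_x1; apply Rdiv_lt_0_compat; lra|].
      replace (u / v - 1) with ((u - v) / v) by (field; lra).
      unfold Rdiv. apply Rmult_le_compat_l; [lra|]. apply Rinv_le_contravar; lra. }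
    assert (Hv0 : 0 <= ln v) by (rewrite <- ln_1; apply ln_le_mono; lra).
    assert (Hu6 : ln u <= ln (6 * INR N)) by (apply ln_le_mono; lra).
    assert (H2 : Rabs ((ln u + ln v) / 2 + 3 * stieltjes 0) <= ln (6 * INR N) + 3 * Rabs (stieltjes 0)).
    { eapply Rle_trans; [apply Rabs_triang|]. rewrite Rabs_right by lra.
      rewrite Rabs_mult, (Rabs_right 3) by lra. pose proof (ln_le_mono v u). lra. }
    rewrite (Rabs_right (ln u - ln v)) by lra. rewrite (Rabs_right (u - v)) by lra.
    unfold beta. replace ((u - v) * ((ln (6 * INR N) + 3 * Rabs (stieltjes 0)) / INR N))
      with ((u - v) / INR N * (ln (6 * INR N) + 3 * Rabs (stieltjes 0))) by (field; lra).
    apply Rmult_le_compat; auto; apply Rabs_pos. }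
  destruct (Rle_lt_dec v u).
  - apply G; auto.
  - rewrite Rabs_minus_sym, (Rabs_minus_sym u). apply G; auto; lra. Qed.

Lemma beta_nonneg N : (1 <= N)%nat -> 0 <= beta N.
Proof. intros HN. assert (1 <= INR N) by (apply (le_INR 1); auto). unfold beta.
  apply Rdiv_le_0_compat; [|lra]. assert (0 <= ln (6 * INR N)) by (rewrite <- ln_1; apply ln_le_mono; lra).
  pose proof (Rabs_pos (stieltjes 0)). lra. Qed.

Lemma Q3_diff_bound N z K : (1 <= N)%nat -> (1 <= K)%nat -> (N <= z)%nat -> (z + 2 * K <= 6 * N)%nat ->
  Rabs (Q3 (z + K) K - Et e3 z K) <= INR K ^ 2 * beta N.
Proof. intros HN HK Hz Hz6. assert (HKp : 0 < INR K) by (apply lt_0_INR; lia).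
  rewrite Q3_diff by auto. rewrite Rabs_mult, Rabs_right by (left; apply Rinv_0_lt_compat; lra).
  assert (Rabs (rsum (seq 0 K) (fun a => rsum (seq (S (z + a)) K) (fun n => res3 (INR n) - res3 (INR (z + K)))))
     <= INR K * (INR K * (INR K * beta N))).
  { pose proof (rsum_abs_le (seq 0 K) (fun a => rsum (seq (S (z + a)) K) (fun n => res3 (INR n) - res3 (INR (z + K))))
      (INR K * (INR K * beta N))) as X. rewrite length_seq in X. apply X.
    intros a Ha. apply in_seq in Ha.
    pose proof (rsum_abs_le (seq (S (z + a)) K) (fun n => res3 (INR n) - res3 (INR (z + K))) (INR K * beta N)) as Y.
    rewrite length_seq in Y. apply Y. intros n Hn. apply in_seq in Hn.
    eapply Rle_trans; [apply res3_lip with (N := N); auto|].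
    - split; [apply lt_INR; lia|]. rewrite <- INR6. apply le_INR; lia.
    - split; [apply lt_INR; lia|]. rewrite <- INR6. apply le_INR; lia.
    - apply Rmult_le_compat_r; [apply beta_nonneg; auto|].
      destruct (le_lt_dec n (z + K)).
      + rewrite Rabs_left1 by (assert (INR n <= INR (z+K)) by (apply le_INR; auto); lra).
        rewrite (plus_INR z K). assert (INR (S z) <= INR n) by (apply le_INR; lia). rewrite S_INR in H. lra.
      + rewrite Rabs_right by (assert (INR (z+K) < INR n) by (apply lt_INR; auto); lra).
        rewrite (plus_INR z K). assert (INR n <= INR (z + K + K)) by (apply le_INR; lia).
        rewrite !plus_INR in H. lra. }
  apply Rle_trans with (/ INR K * (INR K * (INR K * (INR K * beta N)))).
  - apply Rmult_le_compat_l; auto. left; apply Rinv_0_lt_compat; lra.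
  - right. field. lra. Qed.

Lemma P_diff_bound N x H : (1 <= N)%nat -> (N < x)%nat -> (x + H <= 6 * N)%nat ->
  Rabs (S3 x H - M3 (INR x) H - E e3 x H) <= INR H ^ 2 * beta N.
Proof. intros HN Hx Hx6. rewrite P_diff.
  pose proof (rsum_abs_le (seq (S x) H) (fun n => res3 (INR n) - res3 (INR x)) (INR H * beta N)) as Y.
  rewrite length_seq in Y. replace (INR H ^ 2 * beta N) with (INR H * (INR H * beta N)) by ring.
  apply Y. intros n Hn. apply in_seq in Hn.
  eapply Rle_trans; [apply res3_lip with (N := N); auto|].
  - split; [apply lt_INR; lia|]. rewrite <- INR6. apply le_INR; lia.
  - split; [apply lt_INR; lia|]. rewrite <- INR6. apply le_INR; lia.
  - apply Rmult_le_compat_r; [apply beta_nonneg; auto|].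
    rewrite Rabs_right by (assert (INR x <= INR n) by (apply le_INR; lia); lra).
    assert (INR n <= INR (x + H)) by (apply le_INR; lia). rewrite plus_INR in H0. lra. Qed.
Lemma window N u g : (u <= N + N)%nat ->
  W (seq (S N) N) (fun x => g (x + u)%nat) <=
  rsum (seq (S N) N) (fun y => g y ^ 2) + rsum (seq (S (N + N)) (N + N)) (fun y => g y ^ 2).
Proof. intros Hu. unfold W.
  rewrite (rsum_ext _ (fun x => g (x + u)%nat ^ 2) (fun x => g (u + x)%nat ^ 2)) by (intros; rewrite Nat.add_comm; auto).
  rewrite <- (rsum_seq_shift N (S N) u (fun y => g y ^ 2)).
  assert (E1 : rsum (seq (S N) (u + (N + (N + N - u)))) (fun y => g y ^ 2) =
     rsum (seq (S N) N) (fun y => g y ^ 2) + rsum (seq (S (N + N)) (N + N)) (fun y => g y ^ 2)).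
  { replace (u + (N + (N + N - u)))%nat with (N + (N + N))%nat by lia.
    rewrite seq_app, rsum_app. replace (S N + N)%nat with (S (N + N)) by lia. reflexivity. }
  rewrite <- E1. rewrite !seq_app, !rsum_app.
  replace (u + S N)%nat with (S N + u)%nat by lia.
  assert (0 <= rsum (seq (S N) u) (fun y => g y ^ 2)) by (apply rsum_nonneg; intros; apply pow2_ge_0).
  assert (0 <= rsum (seq (S N + u + N) (N + N - u)) (fun y => g y ^ 2)) by (apply rsum_nonneg; intros; apply pow2_ge_0).
  lra. Qed.

Lemma pow4_le a b h : 0 <= a <= h -> 0 <= b <= h -> a ^ 2 * b ^ 2 <= h ^ 4.
Proof. intros Ha Hb. assert (a ^ 2 <= h ^ 2) by (apply pow_incr; lra).
  assert (b ^ 2 <= h ^ 2) by (apply pow_incr; lra).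
  replace (h ^ 4) with (h ^ 2 * h ^ 2) by ring. apply Rmult_le_compat; auto; apply pow2_ge_0. Qed.

Section Large.
Variables (N H K L : nat) (B X1 X2 X3 : R).
Hypotheses (HN : (1 <= N)%nat) (HK : (1 <= K)%nat) (HL : (1 <= L)%nat) (HKH : (K <= H)%nat) (HLH : (L <= H)%nat)
  (H5 : (5 * H <= N)%nat) (HB : 0 <= B).
Hypothesis HJ : forall K', (1 <= K' <= H)%nat ->
  rsum (seq (S N) N) (fun y => Q3 y K' ^ 2) + rsum (seq (S (N + N)) (N + N)) (fun y => Q3 y K' ^ 2)
  <= B * INR N * INR K'.
Hypothesis HX1 : forall m, (m * K <= H)%nat -> INR m ^ 2 * INR K <= X1.
Hypothesis HX2 : forall q, (q * L < K)%nat -> INR q ^ 2 * INR L <= X2.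
Hypothesis HX3 : INR L ^ 2 <= X3.

Let xs := seq (S N) N.
Let Dl := INR N * INR H ^ 4 * beta N ^ 2.

Lemma lenxs : INR (length xs) = INR N. Proof. unfold xs; rewrite length_seq; auto. Qed.

Lemma stepA u : (u <= N + N)%nat -> W xs (fun x => e3 (x + u)%nat) <= B * INR N.
Proof. intros Hu. eapply Rle_trans; [apply window; auto|].
  rewrite (rsum_ext (seq (S N) N) (fun y => e3 y ^ 2) (fun y => Q3 y 1 ^ 2)).
  2:{ intros y Hy; apply in_seq in Hy; rewrite Q3_1 by lia; auto. }
  rewrite (rsum_ext (seq (S (N+N)) (N+N)) (fun y => e3 y ^ 2) (fun y => Q3 y 1 ^ 2)).
  2:{ intros y Hy; apply in_seq in Hy; rewrite Q3_1 by lia; auto. }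
  eapply Rle_trans; [apply HJ; lia|]. simpl INR. lra. Qed.

Definition TT (K' : nat) : R := 2 * (B * INR N * INR K') + 2 * INR N * (INR K' ^ 2 * beta N) ^ 2.

Lemma stepB K' s : (1 <= K' <= H)%nat -> (s <= 2 * H)%nat -> W xs (fun x => Et e3 (x + s) K') <= TT K'.
Proof. intros HK' Hs. unfold TT.
  eapply Rle_trans.
  { apply (W_le2 xs _ (fun x => Q3 (x + (s + K')) K') (INR K' ^ 2 * beta N)).
    intros x Hx. unfold xs in Hx; apply in_seq in Hx.
    rewrite Rabs_minus_sym. replace (x + (s + K'))%nat with (x + s + K')%nat by lia.
    apply Q3_diff_bound; lia. }
  rewrite lenxs.
  assert (W xs (fun x => Q3 (x + (s + K')) K') <= B * INR N * INR K').
  { eapply Rle_trans; [apply (window N (s + K') (fun y => Q3 y K')); lia|]. apply HJ; lia. }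
  lra. Qed.

Lemma stepC s a : (s + a <= N + N)%nat -> W xs (fun x => E e3 (x + s) a) <= INR a ^ 2 * (B * INR N).
Proof. intros Hs. apply level0. intros t Ht.
  rewrite (W_ext xs _ (fun x => e3 (x + (s + t))%nat)) by (intros; f_equal; lia).
  apply stepA; lia. Qed.

Let V1 := 8 * X2 * (B * INR N) + 8 * Dl + 18 * (X3 * (B * INR N)).

Lemma stepD s a : (s <= H)%nat -> (a < K)%nat -> W xs (fun x => E e3 (x + s) a) <= V1.
Proof. intros Hs Ha.
  assert (HLp : 0 < INR L) by (apply lt_0_INR; lia).
  set (q := (a / L)%nat). set (r := (a mod L)%nat).
  assert (Haq : a = (q * L + r)%nat) by (unfold q, r; rewrite Nat.mul_comm; apply Nat.div_mod; lia).
  assert (Hr : (r < L)%nat) by (unfold r; apply Nat.mod_upper_bound; lia).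
  assert (HqL : (q * L <= a)%nat) by lia.
  rewrite Haq.
  eapply Rle_trans.
  { apply (level e3 xs s L q r (TT L) (X3 * (B * INR N))); auto.
    - intros j Hj. apply stepB; [lia|]. assert (j * L <= q * L)%nat by (apply Nat.mul_le_mono_r; lia). lia.
    - intros b Hb. eapply Rle_trans; [apply stepC; lia|]. apply Rmult_le_compat_r; [apply Rmult_le_pos; [auto|apply pos_INR]|].
      eapply Rle_trans; [|apply HX3]. apply pow_incr. split; [apply pos_INR|apply le_INR; lia].
    - intros b Hb. eapply Rle_trans; [apply stepC; lia|]. apply Rmult_le_compat_r; [apply Rmult_le_pos; [auto|apply pos_INR]|].
      eapply Rle_trans; [|apply HX3]. apply pow_incr. split; [apply pos_INR|apply le_INR; lia]. }
  unfold V1, TT, Dl.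
  assert (H1 : INR q ^ 2 * INR L <= X2) by (apply HX2; lia).
  assert (H2 : INR q ^ 2 * INR L ^ 4 <= INR H ^ 4).
  { replace (INR q ^ 2 * INR L ^ 4) with ((INR q * INR L) ^ 2 * INR L ^ 2) by ring.
    apply pow4_le; split.
    - apply Rmult_le_pos; apply pos_INR.
    - rewrite <- mult_INR. apply le_INR; lia.
    - apply pos_INR.
    - apply le_INR; lia. }
  assert (HNr : 0 <= INR N) by apply pos_INR.
  assert (Hb2 : 0 <= beta N ^ 2) by apply pow2_ge_0.
  assert (HBN : 0 <= B * INR N) by nra.
  replace (4 * INR q ^ 2 * (2 * (B * INR N * INR L) + 2 * INR N * (INR L ^ 2 * beta N) ^ 2))
    with (8 * (INR q ^ 2 * INR L) * (B * INR N) + 8 * (INR N * beta N ^ 2) * (INR q ^ 2 * INR L ^ 4)) by ring.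
  assert (0 <= INR N * beta N ^ 2) by nra.
  assert ((INR q ^ 2 * INR L) * (B * INR N) <= X2 * (B * INR N)) by (apply Rmult_le_compat_r; auto).
  assert ((INR N * beta N ^ 2) * (INR q ^ 2 * INR L ^ 4) <= (INR N * beta N ^ 2) * INR H ^ 4) by (apply Rmult_le_compat_l; auto).
  nra. Qed.

Lemma stepE : J3 N H <= B * INR N * (16 * X1 + 288 * X2 + 648 * X3) + 306 * Dl.
Proof.
  assert (HKp : 0 < INR K) by (apply lt_0_INR; lia).
  set (m := (H / K)%nat). set (r := (H mod K)%nat).
  assert (Hm : H = (m * K + r)%nat) by (unfold m, r; rewrite Nat.mul_comm; apply Nat.div_mod; lia).
  assert (Hr : (r < K)%nat) by (unfold r; apply Nat.mod_upper_bound; lia).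
  assert (HmK : (m * K <= H)%nat) by lia.
  assert (HW : W xs (fun x => E e3 x H) <= 4 * INR m ^ 2 * TT K + 18 * V1).
  { rewrite (W_ext xs _ (fun x => E e3 (x + 0) (m * K + r))) by (intros; rewrite Nat.add_0_r, <- Hm; auto).
    apply level; auto.
    - intros j Hj. apply stepB; [lia|]. assert (j * K <= m * K)%nat by (apply Nat.mul_le_mono_r; lia). lia.
    - intros a Ha. apply stepD; lia.
    - intros a Ha. apply stepD; lia. }
  assert (HJ3 : J3 N H <= 2 * W xs (fun x => E e3 x H) + 2 * INR N * (INR H ^ 2 * beta N) ^ 2).
  { unfold J3. rewrite <- lenxs. apply W_le2. intros x Hx. unfold xs in Hx; apply in_seq in Hx.
    apply P_diff_bound; lia. }
  unfold TT, V1, Dl in *.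
  assert (H1 : INR m ^ 2 * INR K <= X1) by (apply HX1; lia).
  assert (H2 : INR m ^ 2 * INR K ^ 4 <= INR H ^ 4).
  { replace (INR m ^ 2 * INR K ^ 4) with ((INR m * INR K) ^ 2 * INR K ^ 2) by ring.
    apply pow4_le; split.
    - apply Rmult_le_pos; apply pos_INR.
    - rewrite <- mult_INR. apply le_INR; lia.
    - apply pos_INR.
    - apply le_INR; lia. }
  assert (HNr : 0 <= INR N) by apply pos_INR.
  assert (Hb2 : 0 <= beta N ^ 2) by apply pow2_ge_0.
  assert (HBN : 0 <= B * INR N) by nra.
  replace (4 * INR m ^ 2 * (2 * (B * INR N * INR K) + 2 * INR N * (INR K ^ 2 * beta N) ^ 2))
    with (8 * (INR m ^ 2 * INR K) * (B * INR N) + 8 * (INR N * beta N ^ 2) * (INR m ^ 2 * INR K ^ 4)) in HW by ring.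
  assert (0 <= INR N * beta N ^ 2) by nra.
  assert ((INR m ^ 2 * INR K) * (B * INR N) <= X1 * (B * INR N)) by (apply Rmult_le_compat_r; auto).
  assert ((INR N * beta N ^ 2) * (INR m ^ 2 * INR K ^ 4) <= (INR N * beta N ^ 2) * INR H ^ 4) by (apply Rmult_le_compat_l; auto).
  replace (2 * INR N * (INR H ^ 2 * beta N) ^ 2) with (2 * (INR N * INR H ^ 4 * beta N ^ 2)) in HJ3 by ring.
  nra. Qed.

End Large.
Lemma nat_above x : exists n : nat, x <= INR n.
Proof. destruct (archimed x) as [H1 H2].
  destruct (Z_le_gt_dec 0 (up x)) as [Hz|Hz].
  - exists (Z.to_nat (up x)). rewrite INR_IZR_INZ, Z2Nat.id by auto. lra.
  - exists 0%nat. assert (IZR (up x) < 0) by (apply IZR_lt; lia). simpl; lra. Qed.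

Lemma floor_half y : 1 <= y -> exists n : nat, (1 <= n)%nat /\ INR n <= y /\ y <= 2 * INR n.
Proof. intros Hy. destruct (archimed y) as [H1 H2].
  assert (Hz : (2 <= up y)%Z). { assert (1 < IZR (up y)) by lra. apply lt_IZR in H. lia. }
  exists (Z.to_nat (up y - 1)).
  assert (E : INR (Z.to_nat (up y - 1)) = IZR (up y) - 1).
  { rewrite INR_IZR_INZ, Z2Nat.id by lia. rewrite minus_IZR. auto. }
  rewrite E. split; [lia|]. assert (2 <= IZR (up y)) by (apply IZR_le; auto). lra. Qed.

Lemma finite_bound (g : nat -> nat -> R) A B : exists M, 0 <= M /\
  forall n h, (n <= A)%nat -> (h <= B)%nat -> g n h <= M.
Proof. exists (rsum (seq 0 (S A)) (fun n => rsum (seq 0 (S B)) (fun h => Rabs (g n h)))). split.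
  - apply rsum_nonneg; intros; apply rsum_nonneg; intros; apply Rabs_pos.
  - intros n h Hn Hh. eapply Rle_trans; [apply RRle_abs|].
    eapply Rle_trans; [|apply (rsum_term_le _ _ n)].
    + apply (rsum_term_le (seq 0 (S B)) (fun h => Rabs (g n h)) h).
      * apply in_seq; lia.
      * intros; apply Rabs_pos.
    + apply in_seq; lia.
    + intros; apply rsum_nonneg; intros; apply Rabs_pos. Qed.

Lemma Rpower_ge1 x a : 1 <= x -> 0 <= a -> 1 <= Rpower x a.
Proof. intros Hx Ha. unfold Rpower. assert (0 <= ln x) by (rewrite <- ln_1; apply ln_le_mono; lra).
  pose proof (exp_ineq1_le (a * ln x)). nra. Qed.

Lemma ln_sqrt_bound x : 1 <= x -> ln x ^ 2 <= 4 * x.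
Proof. intros Hx. assert (Hs : 0 < sqrt x) by (apply sqrt_lt_R0; lra).
  assert (Hxx : sqrt x * sqrt x = x) by (apply sqrt_sqrt; lra).
  assert (Hl : ln x = 2 * ln (sqrt x)) by (rewrite <- Hxx at 1; rewrite ln_mult by auto; ring).
  assert (H1 : ln (sqrt x) <= sqrt x - 1) by (apply ln_le_x1; auto).
  assert (H0 : 0 <= ln x) by (rewrite <- ln_1; apply ln_le_mono; lra).
  assert (ln x <= 2 * sqrt x) by lra. nra. Qed.
Theorem mainTheorem1 (c : R) (hc : 0 < c)
  (CL : forall eps : R, 0 < eps -> exists C : R, 0 < C /\
     forall N H : nat, (0 < N)%nat -> (0 < H)%nat ->
       INR H <= c * Rpower (INR N) (1 / 3) ->
       J3tilde N H <= C * Rpower (INR N) eps * INR N * INR H) :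
  forall eps : R, 0 < eps -> exists C' : R, 0 < C' /\
     forall N H : nat, (0 < N)%nat -> (0 < H)%nat ->
       INR H <= c * Rpower (INR N) (1 / 3) ->
       J3 N H <= C' * Rpower (INR N) eps * INR N * Rpower (INR H) (6 / 5).
Proof.
  intros eps Heps. destruct (CL eps Heps) as [C [HC HCL]].
  set (kap := C * (1 + 2 * Rpower 2 eps)).
  set (g := 3 * Rabs (stieltjes 0)).
  assert (Hkap : 0 <= kap).
  { unfold kap. assert (0 < Rpower 2 eps) by (unfold Rpower; apply exp_pos). nra. }
  destruct (nat_above (125 * c ^ 3)) as [A HA].
  destruct (nat_above (c ^ 3 * INR A)) as [Bn HBn].
  destruct (finite_bound J3 A Bn) as [M [HM0 HM]].
  set (Cb := 1256 * kap + 306 * (c ^ 3 * (48 + 2 * g ^ 2))).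
  assert (HCb : 0 <= Cb).
  { unfold Cb. assert (0 <= c ^ 3) by (apply pow_le; lra). pose proof (pow2_ge_0 g). nra. }
  exists (Cb + M + 1). split; [lra|].
  intros N H HN HH Hc.
  assert (HN1 : 1 <= INR N) by (apply (le_INR 1); lia).
  assert (HH1 : 1 <= INR H) by (apply (le_INR 1); lia).
  set (h := INR H) in *.
  set (P := Rpower (INR N) eps).
  set (y6 := Rpower h (6 / 5)).
  assert (HP : 1 <= P) by (apply Rpower_ge1; lra).
  assert (Hy6h : h <= y6).
  { unfold y6. rewrite <- (Rpower_1 h) at 1 by lra. apply Rle_Rpower; lra. }
  assert (HPNy : 1 <= P * INR N * y6).
  { assert (1 <= P * INR N) by nra. nra. }
  assert (Hcube : h ^ 3 <= c ^ 3 * INR N).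
  { assert (HR : Rpower (INR N) (1 / 3) ^ 3 = INR N).
    { rewrite <- Rpower_pow by (unfold Rpower; apply exp_pos). rewrite Rpower_mult.
      replace (1 / 3 * INR 3) with 1 by (simpl; field). apply Rpower_1; lra. }
    rewrite <- HR, <- Rpow_mult_distr. apply pow_incr. split; lra. }
  destruct (Rlt_le_dec (INR N ^ 2) (125 * c ^ 3)) as [Hsmall|Hlarge].
  -
    assert (HNA : (N <= A)%nat).
    { apply INR_le. assert (INR N <= INR N ^ 2) by nra. lra. }
    assert (HHB : (H <= Bn)%nat).
    { apply INR_le. fold h. assert (h <= h ^ 3) by nra.
      assert (INR N <= INR A) by (apply le_INR; auto).
      assert (c ^ 3 * INR N <= c ^ 3 * INR A) by (apply Rmult_le_compat_l; [apply pow_le; lra|auto]). lra. }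
    eapply Rle_trans; [apply HM; auto|].
    assert (0 <= P * INR N * y6) by lra.
    replace ((Cb + M + 1) * P * INR N * y6) with ((Cb + M + 1) * (P * INR N * y6)) by ring.
    assert (M * 1 <= M * (P * INR N * y6)) by (apply Rmult_le_compat_l; auto).
    assert (0 <= Cb * (P * INR N * y6)) by (apply Rmult_le_pos; auto). nra.
  -
    assert (H5 : (5 * H <= N)%nat).
    { destruct (le_lt_dec (5 * H) N) as [|Hlt]; auto. exfalso.
      assert (INR N < 5 * h) by (unfold h; replace (5 * INR H) with (INR (5 * H)) by (rewrite mult_INR; simpl; ring); apply lt_INR; lia).
      assert (INR N ^ 3 < (5 * h) ^ 3) by (assert (0 < INR N * INR N) by nra; assert (INR N * INR N < (5 * h) * (5*h)) by nra; simpl; nra).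
      assert (INR N ^ 3 < 125 * c ^ 3 * INR N) by nra.
      assert (INR N ^ 2 < 125 * c ^ 3) by nra. lra. }
    set (y1 := Rpower h (3 / 5)). set (y2 := Rpower h (9 / 10)).
    assert (Hy1 : 1 <= y1) by (apply Rpower_ge1; lra).
    assert (Hy2 : 1 <= y2) by (apply Rpower_ge1; lra).
    assert (Hy1h : y1 <= h) by (unfold y1; rewrite <- (Rpower_1 h) at 2 by lra; apply Rle_Rpower; lra).
    assert (Hy2h : y2 <= h) by (unfold y2; rewrite <- (Rpower_1 h) at 2 by lra; apply Rle_Rpower; lra).
    assert (E11 : y1 * y1 = y6) by (unfold y1, y6; rewrite <- Rpower_plus; f_equal; lra).
    assert (E22 : y2 * y2 = y1 * y6) by (unfold y1, y2, y6; rewrite <- !Rpower_plus; f_equal; lra).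
    assert (Ehh : h * h = y2 * Rpower h (11 / 10)).
    { unfold y2. rewrite <- Rpower_plus. replace (9 / 10 + 11 / 10) with (1 + 1) by lra.
      rewrite Rpower_plus, Rpower_1 by lra. auto. }
    assert (H11 : Rpower h (11 / 10) <= y6) by (unfold y6; apply Rle_Rpower; lra).
    assert (H11p : 0 <= Rpower h (11 / 10)) by (unfold Rpower; left; apply exp_pos).
    destruct (floor_half y1 Hy1) as [L [HL1 [HLy HyL]]].
    destruct (floor_half y2 Hy2) as [K [HK1 [HKy HyK]]].
    assert (HLp : 1 <= INR L) by (apply (le_INR 1); auto).
    assert (HKp : 1 <= INR K) by (apply (le_INR 1); auto).
    assert (HKH : (K <= H)%nat) by (apply INR_le; fold h; lra).
    assert (HLH : (L <= H)%nat) by (apply INR_le; fold h; lra).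
    assert (HJ : forall K', (1 <= K' <= H)%nat ->
      rsum (seq (S N) N) (fun y => Q3 y K' ^ 2) + rsum (seq (S (N + N)) (N + N)) (fun y => Q3 y K' ^ 2)
      <= (kap * P) * INR N * INR K').
    { intros K' HK'.
      assert (HK'c : INR K' <= c * Rpower (INR N) (1 / 3)).
      { assert (INR K' <= h) by (apply le_INR; lia). lra. }
      pose proof (HCL N K' ltac:(lia) ltac:(lia) HK'c) as J1.
      assert (HK'c2 : INR K' <= c * Rpower (INR (N + N)) (1 / 3)).
      { eapply Rle_trans; [apply HK'c|]. apply Rmult_le_compat_l; [lra|].
        apply Rle_Rpower_l; [lra|]. split; [lra|]. apply le_INR; lia. }
      pose proof (HCL (N + N)%nat K' ltac:(lia) ltac:(lia) HK'c2) as J2.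
      unfold J3tilde in J1, J2. unfold Q3.
      rewrite plus_INR in J2. replace (INR N + INR N) with (2 * INR N) in J2 by ring.
      rewrite <- Rpower_mult_distr in J2 by lra. fold P in J1, J2.
      unfold kap. assert (0 <= INR K') by apply pos_INR. nra. }
    assert (HX1 : forall m, (m * K <= H)%nat -> INR m ^ 2 * INR K <= 2 * y6).
    { intros m Hm. assert (Hmk : INR m * INR K <= h) by (rewrite <- mult_INR; apply le_INR; auto).
      assert (0 <= INR m) by apply pos_INR.
      assert ((INR m * INR K) ^ 2 <= h ^ 2) by (apply pow_incr; split; [nra|auto]).
      apply (Rmult_le_reg_l (INR K)); [lra|].
      assert (h ^ 2 <= 2 * INR K * y6).
      { replace (h ^ 2) with (h * h) by ring. rewrite Ehh.
        apply Rle_trans with (y2 * y6); [apply Rmult_le_compat_l; lra|]. nra. }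
      nra. }
    assert (HX2 : forall q, (q * L < K)%nat -> INR q ^ 2 * INR L <= 2 * y6).
    { intros q Hq. assert (Hqk : INR q * INR L <= INR K) by (rewrite <- mult_INR; apply le_INR; lia).
      assert (0 <= INR q) by apply pos_INR.
      assert ((INR q * INR L) ^ 2 <= INR K ^ 2) by (apply pow_incr; split; [nra|auto]).
      assert (INR K ^ 2 <= y2 ^ 2) by (apply pow_incr; lra).
      apply (Rmult_le_reg_l (INR L)); [lra|].
      assert (y2 ^ 2 <= 2 * INR L * y6).
      { replace (y2 ^ 2) with (y2 * y2) by ring. rewrite E22. nra. }
      nra. }
    assert (HX3 : INR L ^ 2 <= y6).
    { rewrite <- E11. replace (y1 * y1) with (y1 ^ 2) by ring. apply pow_incr; lra. }
    assert (HBP : 0 <= kap * P) by nra.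
    pose proof (stepE N H K L (kap * P) (2 * y6) (2 * y6) y6 ltac:(lia) HK1 HL1 HKH HLH H5 HBP HJ HX1 HX2 HX3) as Main.
    set (lam := ln (6 * INR N) + g).
    assert (Hg : 0 <= g) by (unfold g; pose proof (Rabs_pos (stieltjes 0)); lra).
    assert (Hln0 : 0 <= ln (6 * INR N)) by (rewrite <- ln_1; apply ln_le_mono; lra).
    assert (Hlam : lam ^ 2 <= (48 + 2 * g ^ 2) * INR N).
    { pose proof (ln_sqrt_bound (6 * INR N) ltac:(lra)). unfold lam.
      pose proof (pow2_ge_0 (ln (6 * INR N) - g)). nra. }
    assert (HD : INR N * h ^ 4 * beta N ^ 2 <= c ^ 3 * (48 + 2 * g ^ 2) * (P * INR N * y6)).
    { replace (INR N * h ^ 4 * beta N ^ 2) with (h * h ^ 3 * lam ^ 2 / INR N)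
        by (unfold beta, lam, g; field; lra).
      assert (Hh3 : h * h ^ 3 <= h * (c ^ 3 * INR N)) by (apply Rmult_le_compat_l; lra).
      assert (h * h ^ 3 * lam ^ 2 / INR N <= c ^ 3 * h * lam ^ 2).
      { apply (Rmult_le_reg_l (INR N)); [lra|].
        replace (INR N * (h * h ^ 3 * lam ^ 2 / INR N)) with (h * h ^ 3 * lam ^ 2) by (field; lra).
        pose proof (pow2_ge_0 lam). nra. }
      assert (0 <= c ^ 3) by (apply pow_le; lra).
      assert (c ^ 3 * h * lam ^ 2 <= c ^ 3 * h * ((48 + 2 * g ^ 2) * INR N)).
      { apply Rmult_le_compat_l; [nra|auto]. }
      assert (INR N * h <= P * INR N * y6).
      { assert (INR N * h <= INR N * y6) by nra. assert (INR N * y6 <= P * (INR N * y6)) by nra. nra. }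
      assert (0 <= 48 + 2 * g ^ 2) by nra.
      assert (c ^ 3 * (48 + 2 * g ^ 2) * (INR N * h) <= c ^ 3 * (48 + 2 * g ^ 2) * (P * INR N * y6))
        by (apply Rmult_le_compat_l; nra).
      nra. }
    fold h in Main.
    eapply Rle_trans; [apply Main|].
    assert (0 <= P * INR N * y6) by lra.
    replace ((Cb + M + 1) * P * INR N * y6) with ((Cb + M + 1) * (P * INR N * y6)) by ring.
    unfold Cb.
    assert (0 <= (M + 1) * (P * INR N * y6)) by nra.
    nra.
Qed.
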